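(* Let $Y$ be a compact metric space. Then $\widetilde{CY}$ is equivariantly homotopy equivalent to $Y^\urcorner$.
   Context: For a space $Z$, $\tilde Z=Z\times Z\setminus\{(z,z)\mid z\in Z\}$ with the involution $(z,z')\mapsto(z',z)$. $CY=Y\times[0,1]/Y\times\{0\}$ is the cone, and $[y,s]$ denotes the image of $(y,s)$. $Y^\urcorner\subset\widetilde{CY}$ is the subset of all pairs $\big([y,s],[y',s']\big)$ such that $s=1$ or $s'=1$, and such that $y\ne y'$ whenever $s<1$ or $s'<1$; it is invariant under the involution. Equivariant homotopy equivalence is with respect to these involutions. *)

(* Defs.v *)
From HB Require Import structures.
From mathcomp Require Import all_boot all_order all_algebra generic_quotient.
From mathcomp Require Import all_classical all_reals all_analysis.
Import Order.TTheory GRing.Theory Num.Theory.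
Import numFieldTopology.Exports.

Set Implicit Arguments.
Unset Strict Implicit.
Unset Printing Implicit Defensive.

Local Open Scope classical_set_scope.
Local Open Scope ring_scope.
Local Open Scope quotient_scope.

Definition unit_int (R : realType) : set R := [set t : R | 0 <= t <= 1].
Arguments unit_int R : clear implicits.
Notation unitI R := (set_type (unit_int R)).

Definition config (Z : Type) : set (Z * Z) := [set p | p.1 <> p.2].
Arguments config Z : clear implicits.
Definition swap (Z : Type) (p : Z * Z) : Z * Z := (p.2, p.1).

(* The cone CY = Y x [0,1] / Y x {0}, with the quotient topology *)
Section cone.
Context {R : realType} (Y : topologicalType).

Definition cone_base : topologicalType := (Y * unitI R)%type.
Local Notation T := cone_base.

Let cone_rel' (a b : T) :=
  (a == b) || ((val a.2 == 0) && (val b.2 == 0)).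

Local Lemma cone_rel_refl : reflexive cone_rel'.
Proof. by move=> ?; rewrite /cone_rel' eqxx. Qed.

Local Lemma cone_rel_sym : symmetric cone_rel'.
Proof. by move=> a b; rewrite /cone_rel' eq_sym andbC. Qed.

Local Lemma cone_rel_trans : transitive cone_rel'.
Proof.
move=> b a c /predU1P[-> //|] + /predU1P[<- //|]; rewrite /cone_rel'.
by move=> /andP[/eqP -> /eqP ->] /andP[_ /eqP ->]; rewrite !eqxx orbT.
Qed.

Definition cone_rel := EquivRel _ cone_rel_refl cone_rel_sym cone_rel_trans.

Definition cone := {eq_quot cone_rel}.
HB.instance Definition _ := Topological.copy cone (quotient_topology cone).
HB.instance Definition _ := Quotient.on cone.

Definition cone_pt (y : Y) (s : unitI R) : cone := \pi_cone (y, s).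

Definition cone_corner : set (cone * cone) :=
  config cone `&`
  [set p | exists (y y' : Y) (s s' : unitI R),
      [/\ p = (cone_pt y s, cone_pt y' s'),
          (val s = 1 \/ val s' = 1) &
          ((val s < 1 \/ val s' < 1) -> y <> y')]].
End cone.
Arguments cone_corner {R} Y.
Arguments cone_pt {R Y}.

Definition equiv_homotopic (R : realType) {X : topologicalType} (A : set X)
    (s : X -> X) (f0 f1 : X -> X) : Prop :=
  exists H : X * R -> X,
    [/\ {within A `*` unit_int R, continuous H},
        (forall x t, A x -> unit_int R t -> A (H (x, t))),
        (forall x, A x -> H (x, 0) = f0 x),
        (forall x, A x -> H (x, 1) = f1 x) &
        forall x t, A x -> unit_int R t -> H (s x, t) = s (H (x, t))].

Definition equiv_htpy_equiv (R : realType) {X X' : topologicalType}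
    (A : set X) (s : X -> X) (B : set X') (s' : X' -> X') : Prop :=
  exists (f : X -> X') (g : X' -> X),
    [/\ {within A, continuous f} /\ {within B, continuous g},
        (forall x, A x -> B (f x)) /\ (forall x, B x -> A (g x)),
        (forall x, A x -> f (s x) = s' (f x)) /\
        (forall x, B x -> g (s' x) = s (g x)),
        equiv_homotopic R A s (g \o f) id &
        equiv_homotopic R B s' (f \o g) id].

(* Main.v *)
Require Import Defs.
From HB Require Import structures.
From mathcomp Require Import all_boot all_order all_algebra generic_quotient.
From mathcomp Require Import all_classical all_reals all_analysis.
From mathcomp Require Import lra.
Import Order.TTheory GRing.Theory Num.Theory.
Import numFieldTopology.Exports.
Set Implicit Arguments.
Unset Strict Implicit.
Unset Printing Implicit Defensive.
Local Open Scope classical_set_scope.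
Local Open Scope ring_scope.
Local Open Scope quotient_scope.

Section S.
Context {R : realType} (Y : metricType R).
Local Notation C := (cone (R:=R) Y).
Local Notation I := (unitI R).
Local Notation pt := (@cone_pt R Y).

Definition radI (c : C) : I := (repr c).2.
Definition rad (c : C) : R := val (radI c).
Definition dir (c : C) : Y := (repr c).1.

Lemma cone_ptK c : pt (dir c) (radI c) = c.
Proof. rewrite /cone_pt /dir /radI -surjective_pairing; exact: reprK. Qed.

Lemma cone_pt_eqP y s y' s' :
  pt y s = pt y' s' <-> (y = y' /\ s = s') \/ (val s = 0 /\ val s' = 0).
Proof.
rewrite /cone_pt; split.
  move/eqmodP; rewrite /= /cone_rel /=.
  move=> /orP[/eqP [-> ->]|/andP[/eqP h1 /eqP h2]]; [by left|by right].
case=> [[-> ->]//|[h1 h2]]; apply/eqmodP => /=; apply/orP; right.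
by rewrite h1 h2 eqxx.
Qed.

Lemma rad_pt y s : rad (pt y s) = val s.
Proof.
have := cone_ptK (pt y s); rewrite cone_pt_eqP /rad.
by case=> [[_ ->]|[-> ->]].
Qed.

Lemma dir_pt y s : 0 < val s -> dir (pt y s) = y.
Proof.
have := cone_ptK (pt y s); rewrite cone_pt_eqP.
by case=> [[-> _]|[_ ->]] //; rewrite ltxx.
Qed.

Lemma cone_open (U : set C) : open [set x : Y * I | U (pt x.1 x.2)] -> open U.
Proof.
move=> h; rewrite /open /= /quotient_open.
suff -> : \pi_C @^-1` U = [set x : Y * I | U (pt x.1 x.2)] by [].
by rewrite /cone_pt; apply/seteqP; split => -[x1 x2].
Qed.


Lemma val2_cont : continuous (fun x : Y * I => val x.2).
Proof.
move=> x; apply: (@continuous_comp _ _ _ snd (fun r : I => val r)).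
  exact: cvg_snd.
exact: initial_continuous.
Qed.

Lemma open_rad (A : set R) : open A -> open [set c : C | A (rad c)].
Proof.
move=> oA; apply: cone_open.
have -> : [set x : Y * I | A (rad (pt x.1 x.2))] = (fun x => val x.2) @^-1` A.
  by apply/seteqP; split => x /=; rewrite rad_pt.
exact: (continuousP _).1 val2_cont _ oA.
Qed.

Lemma rad_cont : continuous rad.
Proof. by apply/continuousP => A oA; exact: open_rad. Qed.

Lemma open_dir (V : set Y) : open V -> open [set c : C | 0 < rad c /\ V (dir c)].
Proof.
move=> oV; apply: cone_open.
have -> : [set x : Y * I | 0 < rad (pt x.1 x.2) /\ V (dir (pt x.1 x.2))] =
   ((fun x => val x.2) @^-1` [set r : R | 0 < r]) `&` (fst @^-1` V).
  apply/seteqP; split => x /=; rewrite rad_pt.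
    by case=> h; rewrite dir_pt.
  by case=> h; rewrite dir_pt.
apply: openI.
  move: val2_cont => /continuousP; apply; exact: open_gt.
have : continuous (@fst Y I) by move=> p; exact: cvg_fst.
by move/continuousP; apply.
Qed.

Lemma dir_cont c : 0 < rad c -> {for c, continuous dir}.
Proof.
move=> c0 U /=; rewrite nbhsE => -[V [oV Vc] VU].
change (nbhs c (dir @^-1` U)).
apply: (@filterS _ _ _ [set d | 0 < rad d /\ V (dir d)]).
  by move=> d [_ /VU].
by apply: open_nbhs_nbhs; split => //; exact: open_dir.
Qed.


Lemma i0_in : (0:R) \in unit_int R.
Proof. by rewrite inE /unit_int /= lexx ler01. Qed.
Definition i0 : I := exist _ 0 i0_in.

Lemma nbhs_I0 (B : set I) : nbhs i0 B ->
  exists2 d : R, 0 < d & forall s : I, val s < d -> B s.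
Proof.
rewrite nbhsE => -[B' [oB' B'0] B'B].
case: oB' => O oO eO.
have : nbhs (0:R) O.
  apply: open_nbhs_nbhs; split => //.
  by have := B'0; rewrite -eO.
case/nbhs_ex => d Hd; exists d%:num => // s sd.
apply: B'B; rewrite -eO /=; apply: Hd.
rewrite /ball /= sub0r normrN ger0_norm //.
by have := set_valP s; case/andP.
Qed.

Lemma tube (U : set C) (c0 : C) : compact [set: Y] -> open U -> U c0 ->
  rad c0 = 0 ->
  exists2 e : R, 0 < e & forall y (s : I), val s < e -> U (pt y s).
Proof.
move=> cY oU Uc0 r0.
have apex y : pt y i0 = c0.
  by rewrite -[c0]cone_ptK cone_pt_eqP; right.
have oP : open [set x : Y * I | U (pt x.1 x.2)].
  move: oU; rewrite /open /= /quotient_open.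
  suff -> : \pi_C @^-1` U = [set x : Y * I | U (pt x.1 x.2)] by [].
  by rewrite /cone_pt; apply/seteqP; split => -[x1 x2].
have := (iffLR (compact_near_coveringP _) cY) R (0:R)^'+
  (fun e y => forall s : I, val s < e -> U (pt y s)) _.
case.
- move=> y _.
  have : nbhs (y, i0) [set x : Y * I | U (pt x.1 x.2)].
    by apply: open_nbhs_nbhs; split => //=; rewrite apex.
  case=> [[A B]] /= [nA nB] AB.
  have [d d0 Hd] := nbhs_I0 nB.
  exists (A, [set e | e < d]) => /=.
    by split => //; exact: nbhs_right_lt.
  case=> a e /= [Aa ed] t te; apply: (AB (a, t)); split => //=.
  by apply: Hd; apply: lt_trans ed.
move=> x /= x0 Hx; exists (x / 2); first by rewrite divr_gt0.
move=> y; apply: (Hx (x / 2)); last by [].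
  by rewrite /ball_ /= sub0r normrN gtr0_norm ?divr_gt0 // ltr_pdivrMr // ltr_pMr // ltr1n.
by rewrite divr_gt0.
Qed.


Lemma pt_cont : continuous (fun x : Y * I => pt x.1 x.2).
Proof.
apply/continuousP => U oU.
move: oU; rewrite /open /= /quotient_open.
suff -> : \pi_C @^-1` U = [set x : Y * I | U (pt x.1 x.2)] by [].
by rewrite /cone_pt; apply/seteqP; split => -[x1 x2].
Qed.

Lemma cvg_I {T} (F : set_system T) {FF : Filter F} (g : T -> I) (s0 : I) :
  (fun z => val (g z)) @ F --> val s0 -> g @ F --> s0.
Proof.
move=> h U; rewrite nbhsE => -[B [oB Bs] BU].
case: oB => O oO eO.
have : nbhs (val s0) O by apply: open_nbhs_nbhs; split => //; rewrite -eO in Bs.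
move/h => HF; change (F (g @^-1` U)).
apply: (@filterS _ F _ (fun z => O (val (g z)))) HF => z /= Oz.
by apply: BU; rewrite -eO; exact: Oz.
Qed.

Lemma rad_ge0 c : 0 <= rad c.
Proof. by have := set_valP (radI c); case/andP. Qed.
Lemma rad_le1 c : rad c <= 1.
Proof. by have := set_valP (radI c); case/andP. Qed.

Lemma cvg_to_cone {T} (F : set_system T) {FF : Filter F} (h : T -> C) (c0 : C) :
  compact [set: Y] ->
  (fun z => rad (h z)) @ F --> rad c0 ->
  (0 < rad c0 -> (fun z => dir (h z)) @ F --> dir c0) ->
  h @ F --> c0.
Proof.
move=> cY hr hd.
have [r0|r0] := eqVneq (rad c0) 0.
  move=> U; rewrite nbhsE => -[V [oV Vc] VU].
  have [e e0 He] := tube cY oV Vc r0.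
  rewrite r0 in hr.
  have HF := cvgr_lt _ hr _ e0; change (F (h @^-1` U)).
  move: (HF FF); apply: filterS => z /= hz.
  by apply: VU; rewrite -[h z]cone_ptK; apply: He.
have rp : 0 < rad c0 by rewrite lt_neqAle eq_sym r0 rad_ge0.
have -> : h = (fun x : Y * I => pt x.1 x.2) \o (fun z => (dir (h z), radI (h z))).
  by apply: funext => z /=; rewrite cone_ptK.
have Hc : (fun x : Y * I => pt x.1 x.2) x @[x --> (dir c0, radI c0)] --> pt (dir c0) (radI c0).
  exact: pt_cont.
rewrite cone_ptK in Hc.
apply: (@cvg_comp _ _ _ (fun z => (dir (h z), radI (h z))) (fun x : Y * I => pt x.1 x.2) F (nbhs (dir c0, radI c0)) (nbhs c0) _ Hc).
have h2 : (fun z => radI (h z)) @ F --> radI c0 by exact: cvg_I.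
exact: (cvg_pair (hd rp) h2).
Qed.


Lemma mdist_cvg {T} (F : set_system T) {FF : Filter F} (f g : T -> Y) x y :
  f @ F --> x -> g @ F --> y -> (fun t => mdist (f t) (g t)) @ F --> mdist x y.
Proof.
move=> fx gy; apply/cvgrPdist_lt => e e0.
have e20 : 0 < e / 2 by rewrite divr_gt0.
near=> t.
have d1 : mdist x (f t) < e / 2.
  by near: t; exact: metricType_numDomainType.cvgr_dist_lt fx _ e20.
have d2 : mdist y (g t) < e / 2.
  by near: t; exact: metricType_numDomainType.cvgr_dist_lt gy _ e20.
have t1 := metric_triangle x (f t) y.
have t2 := metric_triangle (f t) (g t) y.
have t3 := metric_triangle (f t) x (g t).
have t4 := metric_triangle x y (g t).
rewrite (metric_sym (g t) y) in t2; rewrite (metric_sym (f t) x) in t3.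
rewrite ltr_distl; apply/andP; split; lra.
Unshelve. all: by end_near. Qed.

Definition md (a b : C) : R := Num.min 1 (mdist (dir a) (dir b)).
Definition ee (a b : C) : R := Num.min (rad a) (rad b) * md a b.

Lemma md_ge0 a b : 0 <= md a b.
Proof. by rewrite /md le_min ler01 mdist_ge0. Qed.
Lemma md_le1 a b : md a b <= 1.
Proof. by rewrite /md ge_min lexx. Qed.

Lemma ee_ge0 a b : 0 <= ee a b.
Proof. by rewrite /ee mulr_ge0 ?md_ge0 // le_min !rad_ge0. Qed.

Lemma ee_le a b : ee a b <= Num.min (rad a) (rad b).
Proof.
rewrite /ee; rewrite -[leRHS]mulr1; apply: ler_wpM2l; last exact: md_le1.
by rewrite le_min !rad_ge0.
Qed.

Lemma ee_cont (p : C * C) : {for p, continuous (fun q : C * C => ee q.1 q.2)}.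
Proof.
have c1 : {for p, continuous (fun q : C * C => rad q.1)}.
  apply: (@continuous_comp _ _ _ fst rad); first exact: cvg_fst.
  exact: rad_cont.
have c2 : {for p, continuous (fun q : C * C => rad q.2)}.
  apply: (@continuous_comp _ _ _ snd rad); first exact: cvg_snd.
  exact: rad_cont.
have cm : {for p, continuous (fun q : C * C => Num.min (rad q.1) (rad q.2))}.
  exact: (continuous_min c1 c2).
have [p1|p1] := eqVneq (rad p.1) 0.
  have E : ee p.1 p.2 = 0.
    apply/eqP; rewrite eq_le ee_ge0 andbT.
    by have := ee_le p.1 p.2; rewrite p1 min_l ?rad_ge0.
  change ((fun q : C * C => ee q.1 q.2) @ p --> ee p.1 p.2); rewrite E; apply: (@squeeze_cvgr _ _ _ _ (fun _ => 0)
    (fun q : C * C => Num.min (rad q.1) (rad q.2))).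
  - by apply: nearW => q; rewrite ee_ge0 ee_le.
  - exact: cvg_cst.
  - have cm' : (fun q : C * C => Num.min (rad q.1) (rad q.2)) @ p -->
        Num.min (rad p.1) (rad p.2) := cm.
    by rewrite p1 min_l ?rad_ge0 in cm'.
have [p2|p2] := eqVneq (rad p.2) 0.
  have E : ee p.1 p.2 = 0.
    apply/eqP; rewrite eq_le ee_ge0 andbT.
    by have := ee_le p.1 p.2; rewrite p2 min_r ?rad_ge0.
  change ((fun q : C * C => ee q.1 q.2) @ p --> ee p.1 p.2); rewrite E; apply: (@squeeze_cvgr _ _ _ _ (fun _ => 0)
    (fun q : C * C => Num.min (rad q.1) (rad q.2))).
  - by apply: nearW => q; rewrite ee_ge0 ee_le.
  - exact: cvg_cst.
  - have cm' : (fun q : C * C => Num.min (rad q.1) (rad q.2)) @ p -->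
        Num.min (rad p.1) (rad p.2) := cm.
    by rewrite p2 min_r ?rad_ge0 in cm'.
have r1 : 0 < rad p.1 by rewrite lt_neqAle eq_sym p1 rad_ge0.
have r2 : 0 < rad p.2 by rewrite lt_neqAle eq_sym p2 rad_ge0.
apply: cvgM => //.
rewrite /md; apply: (@continuous_min _ _ (fun _ => 1) (fun q : C * C => mdist (dir q.1) (dir q.2))); first exact: cvg_cst.
apply: mdist_cvg.
  apply: (@continuous_comp _ _ _ fst dir); first exact: cvg_fst.
  exact: dir_cont.
apply: (@continuous_comp _ _ _ snd dir); first exact: cvg_snd.
exact: dir_cont.
Qed.


Definition psi (s s' e : R) : R :=
  s * (e + Num.max s s' - s') / (Num.max s s' * (e + 2 * Num.max s s' - s - s')).
Definition rho (s s' e t : R) : R := t * s + (1 - t) * psi s s' e.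

Lemma max_cvg {T} (F : set_system T) {FF : Filter F} (f g : T -> R) a b :
  f @ F --> a -> g @ F --> b -> (fun z => Num.max (f z) (g z)) @ F --> Num.max a b.
Proof.
move=> fa gb.
have -> : (fun z => Num.max (f z) (g z)) = (fun z => (f z + g z + `|f z - g z|) / 2).
  by apply: funext => z; rewrite maxr_absE.
rewrite maxr_absE; apply: cvgM; last exact: cvg_cst.
apply: cvgD; first exact: cvgD.
by apply: cvg_norm; apply: cvgB.
Qed.

Lemma rho_cvg {T} (F : set_system T) {FF : Filter F} (f g h k : T -> R) a b c d :
  f @ F --> a -> g @ F --> b -> h @ F --> c -> k @ F --> d ->
  0 < Num.max a b -> 0 < c + 2 * Num.max a b - a - b ->
  (fun z => rho (f z) (g z) (h z) (k z)) @ F --> rho a b c d.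
Proof.
move=> fa gb hc kd M0 D0.
have hM := @max_cvg _ F FF f g a b fa gb.
rewrite /rho /psi.
apply: cvgD; first exact: cvgM.
apply: cvgM; first by apply: cvgB => //; exact: cvg_cst.
apply: cvgM.
  by apply: cvgM => //; apply: cvgB => //; apply: cvgD.
apply: cvgV; first by apply: mulf_neq0; apply: lt0r_neq0.
apply: cvgM => //.
apply: cvgB => //; apply: cvgB => //; apply: cvgD => //.
by apply: cvgM => //; exact: cvg_cst.
Qed.


Lemma clamp_in (r : R) : Num.min 1 (Num.max 0 r) \in unit_int R.
Proof.
rewrite inE /unit_int /= ge_min lexx /= le_min ler01 /=.
by rewrite le_max lexx.
Qed.
Definition clamp (r : R) : I := @exist R (fun x => x \in unit_int R) _ (clamp_in r).

Lemma clamp_val r : val (clamp r) = Num.min 1 (Num.max 0 r).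
Proof. by []. Qed.

Lemma clampE r : 0 <= r -> r <= 1 -> val (clamp r) = r.
Proof. by move=> r0 r1; rewrite clamp_val max_r // min_r. Qed.

Definition comp (a b : C) (t : R) : C :=
  pt (dir a) (clamp (rho (rad a) (rad b) (ee a b) t)).
Definition Hh (x : (C * C) * R) : C * C :=
  (comp x.1.1 x.1.2 x.2, comp x.1.2 x.1.1 x.2).

Lemma min_cvg {T} (F : set_system T) {FF : Filter F} (f g : T -> R) a b :
  f @ F --> a -> g @ F --> b -> (fun z => Num.min (f z) (g z)) @ F --> Num.min a b.
Proof.
move=> fa gb.
have -> : (fun z => Num.min (f z) (g z)) = (fun z => (f z + g z - `|f z - g z|) / 2).
  by apply: funext => z; rewrite minr_absE.
rewrite minr_absE; apply: cvgM; last exact: cvg_cst.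
apply: cvgB; first exact: cvgD.
by apply: cvg_norm; apply: cvgB.
Qed.

Lemma psi0 s' e : psi 0 s' e = 0.
Proof. by rewrite /psi !mul0r. Qed.

Lemma rho_pos s s' e t : 0 < rho s s' e t -> s != 0.
Proof.
apply: contraTneq => ->; rewrite /rho psi0 !mulr0 addr0 ltxx //.
Qed.

Lemma cone_eq (a b : C) : rad a = rad b -> (rad a = 0 \/ dir a = dir b) -> a = b.
Proof.
move=> E H; rewrite /rad in E H; rewrite -(cone_ptK a) -(cone_ptK b) cone_pt_eqP.
case: H => [r0|d]; first by right; rewrite -E.
by left; split => //; apply: val_inj.
Qed.

Lemma ee_pos a b : 0 < rad a -> 0 < rad b -> dir a != dir b -> 0 < ee a b.
Proof.
move=> ra rb d; rewrite /ee /md mulr_gt0 //; first by rewrite lt_min ra rb.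
by rewrite lt_min ltr01 mdist_gt0.
Qed.

Lemma dist_cond (a b : C) : a != b ->
  0 < Num.max (rad a) (rad b) /\
  0 < ee a b + 2 * Num.max (rad a) (rad b) - rad a - rad b.
Proof.
move=> ab.
have ea := ee_ge0 a b; have a0 := rad_ge0 a; have b0 := rad_ge0 b.
have [Es|Ns] := eqVneq (rad a) (rad b).
  have ra : 0 < rad a.
    rewrite lt_neqAle a0 andbT eq_sym; apply: contraNneq ab => r0.
    by apply/eqP; apply: cone_eq => //; left.
  have da : dir a != dir b.
    by apply: contraNneq ab => d; apply/eqP; apply: cone_eq => //; right.
  have rb : 0 < rad b by rewrite -Es.
  have ep := ee_pos ra rb da.
  rewrite -Es maxxx; split => //; lra.
case/lt_total/orP: Ns => h.
  rewrite max_r ?ltW //; split; lra.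
rewrite max_l ?ltW //; split; lra.
Qed.

Lemma comp_cvg {T} (F : set_system T) {FF : Filter F} (A B : T -> C) (t : T -> R)
    a b t0 :
  compact [set: Y] -> a != b -> A @ F --> a -> B @ F --> b -> t @ F --> t0 ->
  (fun z => comp (A z) (B z) (t z)) @ F --> comp a b t0.
Proof.
move=> cY ab Aa Bb tt0.
have rA : (fun z => rad (A z)) @ F --> rad a.
  exact: (@cvg_comp _ _ _ A rad F (nbhs a) (nbhs (rad a)) Aa (@rad_cont a)).
have rB : (fun z => rad (B z)) @ F --> rad b.
  exact: (@cvg_comp _ _ _ B rad F (nbhs b) (nbhs (rad b)) Bb (@rad_cont b)).
have eAB : (fun z => ee (A z) (B z)) @ F --> ee a b.
  have hp : (fun z => (A z, B z)) @ F --> (a, b) by exact: (cvg_pair Aa Bb).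
  exact: (@cvg_comp _ _ _ (fun z => (A z, B z)) (fun q : C * C => ee q.1 q.2) F (nbhs (a, b)) (nbhs (ee a b)) hp (@ee_cont (a, b))).
have [M0 D0] := dist_cond ab.
have hr := @rho_cvg _ F FF _ _ _ _ _ _ _ _ rA rB eAB tt0 M0 D0.
have hrad : (fun z => rad (comp (A z) (B z) (t z))) @ F --> rad (comp a b t0).
  rewrite /comp rad_pt clamp_val.
  have -> : (fun z => rad (pt (dir (A z)) (clamp (rho (rad (A z)) (rad (B z))
     (ee (A z) (B z)) (t z))))) = (fun z => Num.min 1 (Num.max 0
     (rho (rad (A z)) (rad (B z)) (ee (A z) (B z)) (t z)))).
    by apply: funext => z; rewrite rad_pt clamp_val.
  apply: min_cvg; first exact: cvg_cst.
  by apply: max_cvg => //; exact: cvg_cst.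
apply: cvg_to_cone => // rpos.
have rho0 : 0 < rho (rad a) (rad b) (ee a b) t0.
  move: rpos; rewrite /comp rad_pt clamp_val; apply: contraTT; rewrite -!leNgt => h.
  by rewrite (max_l h) min_r ?ler01.
have ra : 0 < rad a by rewrite lt_neqAle eq_sym (rho_pos rho0) rad_ge0.
have -> : dir (comp a b t0) = dir a.
  by rewrite /comp dir_pt //; move: rpos; rewrite /comp rad_pt.
have dA : (fun z => dir (A z)) @ F --> dir a.
  exact: (@cvg_comp _ _ _ A dir F (nbhs a) (nbhs (dir a)) Aa (dir_cont ra)).
apply: cvg_trans dA; apply: near_eq_cvg.
have HF := cvgr_gt _ hrad _ rpos.
move: (HF FF); apply: filterS => z /= hz.
by rewrite /comp dir_pt //; move: hz; rewrite /comp rad_pt.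
Qed.


Lemma psi_facts s s' e : 0 <= s' -> s' <= s -> 0 < s -> 0 <= e -> 0 < e + s - s' ->
  [/\ psi s s' e = 1, 0 <= psi s' s e <= 1, (e = 0 -> psi s' s e = 0)
    & (s' = s -> psi s' s e = 1)].
Proof.
move=> s'0 ss' s0 e0 D0.
have D : e + 2 * s - s - s' = e + s - s' by lra.
have D2 : e + 2 * s - s' - s = e + s - s' by lra.
have Dn : e + s - s' != 0 by rewrite gt_eqF.
have sn : s != 0 by rewrite gt_eqF.
have sD : 0 < s * (e + s - s') by rewrite mulr_gt0.
rewrite /psi (max_l ss') (max_r ss') D D2 addrK; split.
- by rewrite divff // mulf_neq0.
- apply/andP; split; first by rewrite divr_ge0 // ?mulr_ge0 // ltW.
  rewrite ler_pdivrMr // mul1r; nra.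
- by move=> ->; rewrite mulr0 mul0r.
- move=> E; rewrite E; have -> : e + s - s = e by lra.
  rewrite divff // mulf_neq0 //; move: D0; rewrite E; have -> : e + s - s = e by lra.
  by move=> ?; rewrite gt_eqF.
Qed.


Lemma ee_eq0 a b : dir a = dir b -> ee a b = 0.
Proof.
move=> d; rewrite /ee /md d mdistxx.
have -> : Num.min 1 (0:R) = 0 by rewrite min_r ?ler01.
by rewrite mulr0.
Qed.

Lemma ee_sym a b : ee a b = ee b a.
Proof. by rewrite /ee /md minC metric_sym. Qed.

Lemma rho1_pos (s t : R) : 0 < s -> 0 <= t <= 1 -> 0 < t * s + (1 - t) * 1.
Proof.
move=> s0 /andP[t0 t1]; have [->|tn] := eqVneq t 1; first lra.
have : t < 1 by rewrite lt_neqAle tn.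
have := mulr_ge0 t0 (ltW s0); lra.
Qed.

Lemma rho_in (s p t : R) : 0 <= s <= 1 -> 0 <= p <= 1 -> 0 <= t <= 1 ->
  0 <= t * s + (1 - t) * p <= 1.
Proof. move=> /andP[? ?] /andP[? ?] /andP[? ?]; apply/andP; split; nra. Qed.

Lemma setting a b : a != b -> rad b <= rad a ->
  [/\ 0 < rad a, 0 < ee a b + rad a - rad b,
      psi (rad a) (rad b) (ee a b) = 1,
      0 <= psi (rad b) (rad a) (ee a b) <= 1
    & ((ee a b = 0 -> psi (rad b) (rad a) (ee a b) = 0) /\
       (rad b = rad a -> psi (rad b) (rad a) (ee a b) = 1))].
Proof.
move=> ab h; have [M0 D0] := dist_cond ab.
rewrite (max_l h) in M0 D0.
have D : 0 < ee a b + rad a - rad b by lra.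
have [P1 P2 P3 P4] := psi_facts (rad_ge0 b) h M0 (ee_ge0 a b) D.
by [].
Qed.

Lemma comp_neq a b t : a != b -> 0 <= t <= 1 -> comp a b t != comp b a t.
Proof.
move=> ab ht; wlog h : a b ab / rad b <= rad a.
  move=> W; case: (leP (rad b) (rad a)) => h; first exact: W.
  rewrite eq_sym; apply: W; [by rewrite eq_sym | exact: ltW].
have [s0 D0 P1 P2 [P3 P4]] := setting ab h.
have sI : 0 <= rad a <= 1 by rewrite rad_ge0 rad_le1.
have s'I : 0 <= rad b <= 1 by rewrite rad_ge0 rad_le1.
have r1p := rho1_pos s0 ht.
have i01 : 0 <= (1:R) <= 1 by apply/andP; split; [exact: ler01 | exact: lexx].
have r1I := rho_in sI i01 ht; have r2I := rho_in s'I P2 ht.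
rewrite /comp /rho -(ee_sym a b) P1.
move: P2 P3 P4 r2I; set p2 := psi _ _ _ => P2 P3 P4 r2I.
case/andP: r1I => r10 r11; case/andP: r2I => r20 r21.
case/andP: ht => t0 t1.
apply/eqP; rewrite cone_pt_eqP => -[[d E]|[E _]].
  have E' := congr1 val E; rewrite !clampE // in E'.
  rewrite (P3 (ee_eq0 d)) in E'.
  have : 0 <= t * (rad a - rad b) by rewrite mulr_ge0 // subr_ge0.
  have tt : t = 1 by nra.
  rewrite tt in E'.
  have rr : rad a = rad b by lra.
  move=> _; by apply: (negP ab); apply/eqP; apply: cone_eq => //; right.
by rewrite clampE // in E; lra.
Qed.


Definition cornerish (a b : C) :=
  (rad a = 1 \/ rad b = 1) /\
  (0 < rad a -> 0 < rad b -> (rad a < 1 \/ rad b < 1) -> dir a <> dir b).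

Lemma cornerish_sym a b : cornerish a b -> cornerish b a.
Proof.
case=> [h1 h2]; split; first by case: h1; [right|left].
move=> ra rb h d; apply: (h2 rb ra); first by case: h; [right|left].
by rewrite d.
Qed.

Lemma corner_swap (x y : C) : cone_corner Y (x, y) -> cone_corner Y (y, x).
Proof.
case=> /= xy [y1 [y2 [s1 [s2 [/= E h1 h2]]]]].
split; first by move=> /= e; apply: xy; rewrite e.
exists y2, y1, s2, s1; split => //.
- by case: E => -> ->.
- by case: h1; [right|left].
move=> h d; apply: h2; first by case: h; [right|left].
by rewrite d.
Qed.

Lemma corner_comp a b t : ~ (exists y0 : Y, forall y : Y, y = y0) ->
  a != b -> 0 <= t <= 1 -> (t = 0 \/ cornerish a b) ->
  cone_corner Y (comp a b t, comp b a t).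
Proof.
move=> ns ab ht hc; wlog h : a b ab hc / rad b <= rad a.
  move=> W; case: (leP (rad b) (rad a)) => h; first exact: W.
  apply: corner_swap; apply: W; first by rewrite eq_sym.
    by case: hc => [->|/cornerish_sym]; [left|right].
  exact: ltW.
have [s0 D0 P1 P2 [P3 P4]] := setting ab h.
have sI : 0 <= rad a <= 1 by rewrite rad_ge0 rad_le1.
have s'I : 0 <= rad b <= 1 by rewrite rad_ge0 rad_le1.
have i01 : 0 <= (1:R) <= 1 by apply/andP; split; [exact: ler01 | exact: lexx].
have r1I := rho_in sI i01 ht; have r2I := rho_in s'I P2 ht.
have neq := comp_neq ab ht.
move: neq; rewrite /comp /rho -(ee_sym a b) P1 => neq.
move: P2 P3 P4 r2I; set p2 := psi _ _ _ => P2 P3 P4 r2I.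
case/andP: r1I => r10 r11; case/andP: r2I => r20 r21.
have r1 : t * rad a + (1 - t) * 1 = 1.
  case: hc => [->|[[ra|rb] _]]; first lra.
    by rewrite ra; lra.
  have ra : rad a = 1 by apply/eqP; rewrite eq_le rad_le1 -rb h.
  by rewrite ra; lra.
split; first by move=> /= E; rewrite E eqxx in neq.
have [d|d] := eqVneq (dir a) (dir b).
  have p20 : p2 = 0 by apply: P3; exact: ee_eq0.
  have r2 : t * rad b + (1 - t) * p2 = 0.
    rewrite p20 mulr0 addr0.
    case: hc => [->|[hc1 hc2]]; first by rewrite mul0r.
    have [b0|b0] := eqVneq (rad b) 0; first by rewrite b0 mulr0.
    have rb : 0 < rad b by rewrite lt_neqAle eq_sym b0 rad_ge0.
    have [lb|lb] := ltP (rad b) 1.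
      by exfalso; apply: (hc2 s0 rb (or_intror lb)).
    have rb1 : rad b = 1 by apply/eqP; rewrite eq_le rad_le1 lb.
    have ra1 : rad a = 1 by apply/eqP; rewrite eq_le rad_le1 -rb1 h.
    exfalso; apply: (negP ab); apply/eqP; apply: cone_eq; last by right.
    by rewrite ra1 rb1.
  have [y'' hy] : exists y'', y'' <> dir a.
    case: (pselect (exists y'', y'' <> dir a)) => // hn; exfalso; apply: ns.
    exists (dir a) => y; case: (pselect (y = dir a)) => // hy.
    by exfalso; apply: hn; exists y.
  exists (dir a), y'', (clamp (t * rad a + (1 - t) * 1)),
    (clamp (t * rad b + (1 - t) * p2)); split.
  - congr (_, _); rewrite cone_pt_eqP; right; rewrite !clampE //.
  - by left; rewrite clampE.
  - by move=> _ e; apply: hy.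
exists (dir a), (dir b), (clamp (t * rad a + (1 - t) * 1)),
  (clamp (t * rad b + (1 - t) * p2)); split => //.
- by left; rewrite clampE.
- by move=> _; apply/eqP.
Qed.


Lemma comp1 a b : comp a b 1 = a.
Proof.
rewrite /comp /rho subrr mul0r addr0 mul1r.
rewrite -[RHS]cone_ptK; congr pt; apply: val_inj => /=.
by rewrite max_r ?rad_ge0 // min_r ?rad_le1.
Qed.

Lemma corner_cornerish (x : C * C) : cone_corner Y x -> cornerish x.1 x.2.
Proof.
case=> _ [y1 [y2 [s1 [s2 [-> h1 h2]]]]]; rewrite /cornerish /= !rad_pt; split => //.
move=> p1 p2 h; rewrite !dir_pt //; exact: h2.
Qed.

Lemma Hh_cont (x : (C * C) * R) : compact [set: Y] -> x.1.1 != x.1.2 ->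
  {for x, continuous Hh}.
Proof.
move=> cY hx.
have f11 : (fun z : (C * C) * R => z.1.1) @ x --> x.1.1.
  exact: (@cvg_comp _ _ _ fst fst (nbhs x) (nbhs x.1) (nbhs x.1.1) cvg_fst cvg_fst).
have f12 : (fun z : (C * C) * R => z.1.2) @ x --> x.1.2.
  exact: (@cvg_comp _ _ _ fst snd (nbhs x) (nbhs x.1) (nbhs x.1.2) cvg_fst cvg_snd).
have f2 : (fun z : (C * C) * R => z.2) @ x --> x.2 by exact: cvg_snd.
have c1 := comp_cvg cY hx f11 f12 f2.
have hx2 : x.1.2 != x.1.1 by rewrite eq_sym.
have c2 := comp_cvg cY hx2 f12 f11 f2.
change ((fun z : (C * C) * R => (comp z.1.1 z.1.2 z.2, comp z.1.2 z.1.1 z.2)) @ x --> (comp x.1.1 x.1.2 x.2, comp x.1.2 x.1.1 x.2)).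
exact: (cvg_pair (c1 (nbhs_filter x)) (c2 (nbhs_filter x))).
Qed.

End S.

Theorem lemma6p1 (R : realType) (Y : metricType R) :
  compact [set: Y] ->
  ~ (exists y0 : Y, forall y : Y, y = y0) ->
  equiv_htpy_equiv R (config (cone (R:=R) Y)) (@swap _)
                     (cone_corner (R:=R) Y) (@swap _).
Proof.
move=> cY ns.
have i0 : 0 <= (0:R) <= 1 by rewrite lexx ler01.
have Hc : {within config (cone (R:=R) Y) `*` unit_int R, continuous (@Hh R Y)}.
  apply: continuous_in_subspaceT => z /set_mem [hz _].
  by apply: Hh_cont => //; apply/eqP.
exists (fun p => Hh (p, 0)), id; split.
- split; last by apply: continuous_subspaceT => p; exact: cvg_id.
  apply: continuous_in_subspaceT => p /set_mem hp.
  have hz : (fun q : cone Y * cone Y => (q, (0:R))) @ p --> (p, 0).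
    exact: (cvg_pair cvg_id (cvg_cst _)).
  have := Hh_cont (x := (p, 0)) cY (introN eqP hp).
  exact: (@cvg_comp _ _ _ _ _ _ (nbhs (p, 0)) _ hz).
- split; last by move=> p [].
  move=> p hp; apply: (corner_comp ns (introN eqP hp) i0); by left.
- by split.
- exists (@Hh R Y); split => //.
  + move=> x t hx ht; apply/eqP; exact: comp_neq (introN eqP hx) ht.
  + by move=> x _ /=; rewrite /Hh /= !comp1 -surjective_pairing.
- exists (@Hh R Y); split => //.
  + apply: continuous_subspaceW Hc; move=> z [hz ht]; split => //; by case: hz.
  + move=> x t hx ht; apply: corner_comp => //; first by apply/eqP; case: hx.
    right; exact: corner_cornerish.
  + by move=> x _ /=; rewrite /Hh /= !comp1 -surjective_pairing.
Qed.
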